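(* For every real $x\ge6$, $$\sum_{n>x}\frac{1}{n\,\varphi(n)}<\frac{2.1}{x}.$$
   Context: $\varphi$ is Euler's totient function; the sum is over integers $n>x$. *)

(* Defs.v *)
From mathcomp Require Import ssreflect ssrfun ssrbool eqtype ssrnat prime.
From Stdlib Require Import Reals.
From Coquelicot Require Import Coquelicot.
Open Scope R_scope.

Definition tail_term (x : R) (n : nat) : R :=
  if Rlt_dec x (INR n) then / (INR n * INR (totient n)) else 0.

(* Main.v *)
Require Import Defs.
From mathcomp Require Import ssreflect ssrfun ssrbool eqtype ssrnat prime.
From Stdlib Require Import Reals ZArith.
From Coquelicot Require Import Coquelicot.
From mathcomp Require Import all_boot all_order all_algebra.
From mathcomp Require Import Rstruct.
From mathcomp Require Import ring lra zify.
From Stdlib Require Lra.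
Import Order.TTheory GRing.Theory Num.Theory.
Set Warnings "-notation-overridden -ambiguous-paths".
Local Open Scope ring_scope.

Definition sqf (n : nat) : bool := all (fun i => ~~ (i * i %| n)%N) (iota 2 n).
Definition g (n : nat) : R := if sqf n then ((totient n)%:R)^-1 else 0.

Lemma sqfP n : (0 < n)%N -> reflect (forall i, (1 < i)%N -> ~~ (i * i %| n)%N) (sqf n).
Proof.
move=> n0; apply: (iffP allP) => [H i Hi | H i].
  case: (ltnP i (2 + n)) => Hin.
    by apply: H; rewrite mem_iota; apply/andP; split.
  apply/negP => /(dvdn_leq n0) => Hle. 
  have : (i <= i * i)%N by rewrite leq_pmulr //; lia.
  lia.
by rewrite mem_iota => /andP [h1 _]; apply: H.
Qed.

Lemma sqf_mul p d : prime p -> ~~ (p %| d)%N -> (0 < d)%N -> sqf (p * d) = sqf d.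
Proof.
move=> pp npd d0.
have pd0 : (0 < p * d)%N by rewrite muln_gt0 prime_gt0.
apply/idP/idP => [/(sqfP _ pd0) H | /(sqfP _ d0) H]; [apply/(sqfP _ d0) | apply/(sqfP _ pd0)] => i Hi.
  apply/negP => hd; move/negP: (H i Hi); apply; exact: dvdn_mull.
apply/negP => hd.
case Hpi: (p %| i)%N.
  move: Hpi => /dvdnP [q Hq]; subst i.
  have : (p * p %| p * d)%N by apply: dvdn_trans hd; apply: dvdn_mul; apply: dvdn_mull.
  rewrite dvdn_pmul2l ?prime_gt0 // => pd; by rewrite pd in npd.
have cip : coprime (i * i) p by rewrite coprimeMl coprime_sym prime_coprime // Hpi.
move: hd; rewrite Gauss_dvdr // => hd. by move/negP: (H i Hi).
Qed.

Lemma totient0 : totient 0 = 0%N.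
Proof. by apply/eqP; rewrite -leqn0 leqNgt totient_gt0. Qed.

Lemma g0 : g 0 = 0.
Proof. by rewrite /g totient0 invr0; case: sqf. Qed.

Lemma g_ge0 n : 0 <= g n.
Proof. rewrite /g; case: sqf => //; rewrite invr_ge0 ler0n //. Qed.

Lemma g_le n : g n <= ((totient n)%:R)^-1.
Proof. rewrite /g; case: sqf => //; rewrite invr_ge0 ler0n //. Qed.

Lemma g_mul p d : prime p -> ~~ (p %| d)%N -> (0 < d)%N -> g (p * d) = g d / (p.-1)%:R.
Proof.
move=> pp npd d0; rewrite /g sqf_mul //.
have cpd : coprime p d by rewrite prime_coprime.
case: sqf; last by rewrite mul0r.
by rewrite totient_coprime // totient_prime // natrM invfM mulrC.
Qed.

Lemma widen_sum a b (F : nat -> R) : (a <= b)%N ->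
  (forall e, (a <= e)%N -> (e < b)%N -> F e = 0) ->
  \sum_(0 <= e < a) F e = \sum_(0 <= e < b) F e.
Proof.
move=> ab H; rewrite (big_cat_nat (leq0n a) ab) /=.
have -> : \sum_(a <= e < b) F e = 0.
  by rewrite big_nat_cond big1 // => e /andP[/andP[h1 h2] _]; exact: H.
by rewrite addr0.
Qed.

Lemma cond_range j M (F : nat -> R) :
  \sum_(0 <= m < M | (j <= m)%N) F m = \sum_(j <= m < M) F m.
Proof.
case: (leqP j M) => h.
  rewrite (big_cat_nat (leq0n j) h) /= big_nat_cond big1 ?add0r.
    rewrite big_nat_cond [in RHS]big_nat_cond; apply: eq_bigl => m.
    by case: (j <= m)%N; rewrite ?andbT ?andbF.
  move=> m /andP[/andP[_ hm] hj]; lia.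
rewrite [RHS]big_geq ?(ltnW h) // big_nat_cond big1 // => m /andP[/andP[_ hm] hj]; lia.
Qed.

Lemma mult_sum p M (F : nat -> R) : (0 < p)%N ->
  \sum_(0 <= e < p * M | (p %| e)%N) F e = \sum_(0 <= d < M) F (p * d).
Proof.
move=> p0; elim: M => [|M IH]; first by rewrite muln0 !big_geq.
rewrite big_nat_recr //= -IH mulnS addnC.
rewrite (big_cat_nat (leq0n (p * M)) (leq_addr _ _)) /=; congr (_ + _).
rewrite big_ltn_cond; last by lia.
rewrite (dvdn_mulr _ (dvdnn p)) big_nat_cond big1 ?addr0 //.
move=> e /andP[/andP[h1 h2] /dvdnP [q Hq]]; subst e.
have : (p * M < p * q)%N by rewrite (mulnC p q).
rewrite ltn_pmul2l // => a1.
have : (p * q < p * M.+1)%N by rewrite (mulnC p q) mulnS addnC.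
rewrite ltn_pmul2l // => a2.
lia.
Qed.

Definition Gs (n B : nat) : R := \sum_(0 <= d < B | (d %| n)%N) g d.

Lemma GsB n B : (0 < n)%N -> (n < B)%N -> Gs n B = Gs n n.+1.
Proof.
move=> n0 nB; rewrite /Gs !(big_mkcond (fun d => (d %| n)%N)) /=.
symmetry; apply: widen_sum => // e he _.
case: ifP => // /(dvdn_leq n0); lia.
Qed.

Lemma totient1 : totient 1 = 1%N.
Proof. by rewrite totient_count_coprime big_nat1. Qed.

Lemma sumG_ge0 (F : nat -> R) a b : (forall i, 0 <= F i) -> 0 <= \sum_(a <= i < b) F i.
Proof. move=> H; apply: sumr_ge0 => i _; exact: H. Qed.

Lemma Gs_ge0 n B : 0 <= Gs n B.
Proof. apply: sumr_ge0 => i _; exact: g_ge0. Qed.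


Lemma Gs_pmul p m N : prime p -> ~~ (p %| m)%N -> (0 < m)%N -> (p * m <= N)%N ->
  \sum_(0 <= d < N.+1) (if (p %| d)%N && (d %/ p %| m)%N then g d else 0)
  = Gs m m.+1 / (p.-1)%:R.
Proof.
move=> pp npm m0 pmN.
have p0 : (0 < p)%N := prime_gt0 pp.
transitivity (\sum_(0 <= d < N.+1 | (p %| d)%N) (if (d %/ p %| m)%N then g d else 0)).
  by rewrite [RHS]big_mkcond; apply: eq_bigr => d _; case: (p %| d)%N.
transitivity (\sum_(0 <= d < p * N.+1 | (p %| d)%N) (if (d %/ p %| m)%N then g d else 0)).
  rewrite !(big_mkcond (fun d => (p %| d)%N)) /=.
  apply: widen_sum; first by rewrite leq_pmull.
  move=> d hd _; case: ifP => // /dvdnP [q dq]; subst d; rewrite mulnK //.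
  case: ifP => // /(dvdn_leq m0) hq.
  have : (q * p <= m * p)%N by rewrite leq_mul2r hq orbT.
  rewrite (mulnC m p); lia.
rewrite mult_sum //.
transitivity (\sum_(0 <= d < N.+1) (if (d %| m)%N then g d else 0) * (p.-1)%:R^-1).
  apply: eq_bigr => d _; rewrite mulKn //.
  case: ifP => [dm|]; last by rewrite mul0r.
  have d0 : (0 < d)%N by apply: dvdn_gt0 dm.
  rewrite g_mul //; apply/negP => pd; move/negP: npm; apply; exact: dvdn_trans dm.
rewrite -mulr_suml -big_mkcond /=.
congr (_ * _); rewrite -/(Gs m N.+1) GsB //.
have : (1 * m <= p * m)%N by rewrite leq_mul2r prime_gt0 ?orbT.
lia.
Qed.
Lemma key n : (0 < n)%N -> n%:R <= (totient n)%:R * Gs n n.+1.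
Proof.
elim/ltn_ind: n => n IH n0.
case: (leqP n 1) => [n1 | n1].
  have -> : n = 1%N by lia.
  rewrite totient1 mul1r /Gs big_mkcond big_nat_recr //= big_nat1 /=.
  by rewrite /g /= totient1 invr1 add0r.
set p := pdiv n.
have pp : prime p := pdiv_prime n1.
set m := (n`_p^')%N.
set e := logn p n.
have hn : n = (p ^ e * m)%N by rewrite -p_part partnC.
have e0 : (0 < e)%N by rewrite logn_gt0 mem_primes pp n0 pdiv_dvd.
have m0 : (0 < m)%N by apply: part_gt0.
have cop : coprime (p ^ e) m by rewrite -p_part coprime_partC.
have npm : ~~ (p %| m)%N by move: cop; rewrite coprime_pexpl // prime_coprime.
have pe : (1 < p ^ e)%N by rewrite -(expn0 p) ltn_exp2l ?prime_gt1.
have mn : (m < n)%N by rewrite [X in (_ < X)%N]hn -{1}[m]mul1n ltn_pmul2r.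
have tn : totient n = (p.-1 * p ^ e.-1 * totient m)%N
  by rewrite {1}hn totient_coprime // totient_pfactor.
have IHm := IH m mn m0.
have mdn : (m %| n)%N by rewrite hn dvdn_mull.
have pmn : (p * m %| n)%N.
  by rewrite hn dvdn_mul // -{1}(expn1 p) dvdn_exp2l.
have p1 : (1 < p)%N := prime_gt1 pp.
set a : R := (p.-1)%:R.
have a0 : 0 < a by rewrite /a ltr0n; lia.
have Gin : Gs m m.+1 * (1 + a^-1) <= Gs n n.+1.
  rewrite mulrDr mulr1 /a.
  have pmn' : (p * m <= n)%N := dvdn_leq n0 pmn.
  rewrite -(@Gs_pmul p m n pp npm m0 pmn').
  have -> : Gs m m.+1 = \sum_(0 <= d < n.+1) (if (d %| m)%N then g d else 0).
    by rewrite -(@GsB m n.+1 m0) ?ltnS ?(ltnW mn) // /Gs big_mkcond.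
  rewrite -big_split /Gs [X in _ <= X]big_mkcond; apply: ler_sum => d _ /=.
  case dm: (d %| m)%N.
    have dn : (d %| n)%N := dvdn_trans dm mdn.
    rewrite dn.
    have -> : ((p %| d)%N && (d %/ p %| m)%N) = false.
      apply/negP => /andP [pd _]; move/negP: npm; apply; exact: dvdn_trans dm.
    by rewrite addr0.
  rewrite add0r; case h: ((p %| d)%N && (d %/ p %| m)%N).
    move/andP: h => [pd dpm].
    have dn : (d %| n)%N.
      apply: dvdn_trans pmn; rewrite -(divnK pd) mulnC dvdn_mul //.
    by rewrite dn.
  by case: ifP => _; [exact: g_ge0 | done].
have pa : p%:R = a + 1 :> R by rewrite /a -[in LHS](prednK (prime_gt0 pp)) -natr1.
have hpe : (p ^ e)%:R = a * (p ^ e.-1)%:R * (1 + a^-1) :> R.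
  rewrite -[in LHS](prednK e0) expnS natrM pa; field; exact: lt0r_neq0.
rewrite tn !natrM -/a.
apply: le_trans (_ : (p ^ e)%:R * ((totient m)%:R * Gs m m.+1) <= _).
  rewrite {1}hn natrM; apply: ler_wpM2l => //; exact: ler0n.
rewrite hpe.
have -> : a * (p ^ e.-1)%:R * (1 + a^-1) * ((totient m)%:R * Gs m m.+1)
   = a * (p ^ e.-1)%:R * (totient m)%:R * (Gs m m.+1 * (1 + a^-1)) by ring.
apply: ler_wpM2l => //.
apply: mulr_ge0; [apply: mulr_ge0; [exact: ltW | exact: ler0n] | exact: ler0n].
Qed.

Definition invsq (m : nat) : R := ((m * m)%:R)^-1.
Definition Tsum (j M : nat) : R := \sum_(j <= m < M) invsq m.
Definition S (k N : nat) : R := \sum_(k.+1 <= n < N.+1) ((n * totient n)%:R)^-1.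

Lemma invsq_ge0 m : 0 <= invsq m.
Proof. by rewrite /invsq invr_ge0 ler0n. Qed.

Lemma invsqM a b : invsq (a * b) = invsq a * invsq b.
Proof. by rewrite /invsq -invfM -natrM mulnACA. Qed.

Lemma term_le n B : (n < B)%N -> ((n * totient n)%:R)^-1 <= invsq n * Gs n B.
Proof.
move=> nB; case: (posnP n) => [->|n0].
  by rewrite mul0n invr0 /invsq mul0n invr0 mul0r.
rewrite (@GsB n B) //.
have := key n n0.
have t0 : (0 < totient n)%N by rewrite totient_gt0.
rewrite /invsq !natrM.
set x : R := n%:R; set t : R := (totient n)%:R; set G := Gs n n.+1 => h.
have x0 : 0 < x by rewrite /x ltr0n.
have tp : 0 < t by rewrite /t ltr0n.
have -> : (x * t)^-1 = x * (x * x * t)^-1.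
  by field; rewrite lt0r_neq0 ?lt0r_neq0.
apply: le_trans (_ : (t * G) * (x * x * t)^-1 <= _).
  apply: ler_wpM2r => //; rewrite invr_ge0; apply: mulr_ge0; [apply: mulr_ge0|]; exact: ltW.
have -> : t * G * (x * x * t)^-1 = (x * x)^-1 * G.
  by field; rewrite lt0r_neq0 ?lt0r_neq0.
done.
Qed.

Lemma inner_le k N d :
  \sum_(k.+1 <= n < N.+1) (if (d %| n)%N then g d else 0) * invsq n
  <= g d * invsq d * Tsum (k %/ d).+1 N.+1.
Proof.
case: (posnP d) => [->|d0].
  rewrite g0 !mul0r big1 // => n _; case: ifP => _; exact: mul0r.
set F := fun n => if (k < n)%N && (n < N.+1)%N then invsq n else 0.
have E1 : \sum_(k.+1 <= n < N.+1) (if (d %| n)%N then g d else 0) * invsq n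
    = g d * \sum_(0 <= n < d * N.+1 | (d %| n)%N) F n.
  have Ea : \sum_(0 <= n < d * N.+1 | (d %| n)%N) F n
      = \sum_(0 <= n < N.+1) (if (d %| n)%N then F n else 0).
    rewrite big_mkcond /=; symmetry; apply: widen_sum; first by rewrite leq_pmull.
    move=> e he _; case: ifP => // _.
    rewrite /F (_ : (e < N.+1)%N = false) ?andbF //.
    by apply/negbTE; rewrite -leqNgt.
  have Eb : \sum_(0 <= n < N.+1) (if (d %| n)%N then F n else 0)
      = \sum_(k.+1 <= n < N.+1) (if (d %| n)%N then invsq n else 0).
    rewrite -(@cond_range k.+1 N.+1) [RHS]big_mkcond /=; apply: eq_big_nat => n /andP [_ hn].
    by rewrite /F hn andbT; case: (d %| n)%N; case: (ltnP k n).
  rewrite Ea Eb mulr_sumr; apply: eq_bigr => n _.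
  by case: (d %| n)%N; rewrite ?mul0r ?mulr0 // mulr1.
rewrite E1 mult_sum // -mulrA; apply: ler_wpM2l; first exact: g_ge0.
rewrite /Tsum -(@cond_range (k %/ d).+1 N.+1) mulr_sumr [X in _ <= X]big_mkcond /=.
apply: ler_sum_nat => m _.
rewrite /F; case: ifP => [/andP [h1 _] | _].
  have -> : ((k %/ d).+1 <= m)%N by rewrite ltn_divLR // mulnC.
  by rewrite invsqM.
case: ifP => _; last done.
apply: mulr_ge0; exact: invsq_ge0.
Qed.

Lemma bound1 k N :
  S k N <= \sum_(0 <= d < N.+1) g d * invsq d * Tsum (k %/ d).+1 N.+1.
Proof.
apply: le_trans (_ : \sum_(k.+1 <= n < N.+1) invsq n * Gs n N.+1 <= _).
  apply: ler_sum_nat => n /andP [_ hn]; exact: term_le.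
apply: le_trans (_ : \sum_(0 <= d < N.+1) \sum_(k.+1 <= n < N.+1)
    (if (d %| n)%N then g d else 0) * invsq n <= _); last first.
  apply: ler_sum_nat => d _; exact: inner_le.
rewrite exchange_big_nat /=; apply: ler_sum_nat => n _.
rewrite /Gs big_mkcond mulr_sumr /=; apply: ler_sum_nat => d _.
by rewrite mulrC.
Qed.

Lemma Tsum_ge0 j M : 0 <= Tsum j M.
Proof. apply: sumr_ge0 => i _; exact: invsq_ge0. Qed.

Lemma invsq_tel (M : nat) : (0 < M)%N ->
  invsq M <= 2 / (2 * M%:R - 1) - 2 / (2 * M.+1%:R - 1).
Proof.
move=> M0; rewrite /invsq natrM -(addn1 M) natrD.
have h : 1 <= (M%:R : R) by rewrite ler1n.
set x : R := M%:R in h *.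
have -> : 2 / (2 * x - 1) - 2 / (2 * (x + 1) - 1) = 4 / ((2 * x - 1) * (2 * x + 1)).
  by field; apply/andP; split; apply: lt0r_neq0; lra.
rewrite ler_pdivlMr; last by apply: mulr_gt0; lra.
rewrite mulrC ler_pdivrMr; last by apply: mulr_gt0; lra.
nra.
Qed.

Lemma Tsum_tel j M : (0 < j)%N -> (j <= M)%N ->
  Tsum j M <= 2 / (2 * j%:R - 1) - 2 / (2 * M%:R - 1).
Proof.
move=> j0; elim: M => [|M IH]; first by rewrite leqn0 => /eqP h; rewrite h in j0.
rewrite leq_eqVlt => /orP [/eqP <-|].
  by rewrite /Tsum big_geq // subrr.
rewrite ltnS => hjM; rewrite /Tsum big_nat_recr //= -/(Tsum j M).
have := IH hjM; have := @invsq_tel M (leq_trans j0 hjM); lra.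
Qed.

Lemma Tsum_le j M : (0 < j)%N -> Tsum j M <= 2 / (2 * j%:R - 1).
Proof.
move=> j0; case: (leqP j M) => h.
  apply: le_trans (@Tsum_tel j M j0 h) _.
  have : 1 <= (M%:R : R) by rewrite ler1n; apply: leq_trans j0 h.
  move=> hM; rewrite lerBlDr lerDl divr_ge0 //; lra.
rewrite /Tsum big_geq ?(ltnW h) //.
have : 1 <= (j%:R : R) by rewrite ler1n.
move=> hj; rewrite divr_ge0 //; lra.
Qed.

Lemma Tsum_le' j M : (0 < j)%N -> Tsum j M * (2 * j%:R - 1) <= 2.
Proof.
move=> j0; have h := @Tsum_le j M j0.
have hj : 1 <= (j%:R : R) by rewrite ler1n.
rewrite -ler_pdivlMr //; lra.
Qed.

Lemma Tsum_split j M : Tsum j M <= invsq j + Tsum j.+1 M.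
Proof.
case: (ltnP j M) => h; first by rewrite /Tsum big_ltn.
rewrite /Tsum big_geq //; apply: addr_ge0; [exact: invsq_ge0 | exact: Tsum_ge0].
Qed.

Lemma Tsum_le165 j M : (0 < j)%N -> Tsum j M <= 33 / 20 / j%:R.
Proof.
move=> j0; case: (ltnP 1 j) => hj.
  apply: le_trans (@Tsum_le j M j0) _.
  have h2 : 2 <= (j%:R : R) by rewrite ler_nat.
  rewrite ler_pdivlMr; last lra.
  rewrite mulrC mulrA ler_pdivrMr; last lra.
  lra.
have -> : j = 1%N by lia.
apply: le_trans (Tsum_split 1 M) _.
apply: le_trans (_ : invsq 1 + (invsq 2 + Tsum 3 M) <= _).
  apply: lerD => //; exact: Tsum_split.
have := @Tsum_le' 3 M erefl.
rewrite /invsq mul1n (_ : (1%:R : R) = 1) // invr1 (_ : ((2 * 2)%:R : R) = 4) //.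
lra.
Qed.

Lemma Tsum_split2 j L M : (j <= L)%N -> Tsum j M <= Tsum j L + Tsum L M.
Proof.
move=> jL; case: (leqP M L) => hML.
  rewrite /Tsum [X in _ <= _ + X]big_geq // addr0.
  case: (leqP M j) => hMj; first by rewrite big_geq //; exact: Tsum_ge0.
  rewrite [X in _ <= X](big_cat_nat (ltnW hMj) hML) /= lerDl; exact: Tsum_ge0.
by rewrite /Tsum (big_cat_nat jL (ltnW hML)).
Qed.

Lemma S_ge0 k N : 0 <= S k N.
Proof. apply: sumr_ge0 => n _; rewrite invr_ge0; exact: ler0n. Qed.

Lemma Fterm_ge0 k N d : 0 <= g d * invsq d * Tsum (k %/ d).+1 N.+1.
Proof. apply: mulr_ge0; [apply: mulr_ge0; [exact: g_ge0 | exact: invsq_ge0] | exact: Tsum_ge0]. Qed.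

Lemma split_sum (F : nat -> R) N : (forall d, 0 <= F d) ->
  \sum_(0 <= d < N.+1) F d <= \sum_(0 <= d < 101) F d + \sum_(101 <= d < N.+1) F d.
Proof.
move=> F0; case: (leqP 101 N.+1) => h.
  by rewrite (big_cat_nat (leq0n 101) h).
rewrite [X in _ <= _ + X]big_geq ?(ltnW h) // addr0.
rewrite (big_cat_nat (leq0n N.+1) (ltnW h)) /= lerDl; apply: sumr_ge0 => i _; exact: F0.
Qed.

Lemma part2 k N : (k.+1)%:R * \sum_(101 <= d < N.+1) g d * invsq d * Tsum (k %/ d).+1 N.+1
  <= 33 / 20 * S 100 N.
Proof.
rewrite /S mulr_sumr mulr_sumr; apply: ler_sum_nat => d /andP [hd _].
have d0 : (0 < d)%N by apply: leq_trans hd.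
set j := (k %/ d).+1.
have j0 : (0 < j)%N by [].
have hK : (k.+1 <= j * d)%N by apply: ltn_ceil.
have t0 : (0 < totient d)%N by rewrite totient_gt0.
have hT := @Tsum_le165 j N.+1 j0.
have hg := g_le d.
have hK' : ((k.+1)%:R : R) <= (j * d)%:R by rewrite ler_nat.
rewrite natrM in hK'.
rewrite /invsq !natrM.
set K : R := (k.+1)%:R in hK' *; set J : R := j%:R in hT hK' *; set D : R := d%:R in hK' *.
set t : R := (totient d)%:R in hg *. set T := Tsum j N.+1 in hT *.
have D0 : 0 < D by rewrite /D ltr0n.
have J0 : 0 < J by rewrite /J ltr0n.
have tp : 0 < t by rewrite /t ltr0n.
have K0 : 0 <= K by exact: ler0n.
have T0 : 0 <= T by exact: Tsum_ge0.
apply: le_trans (_ : K * (t^-1 * (D * D)^-1 * (33 / 20 / J)) <= _).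
  rewrite -!mulrA; apply: ler_wpM2l => //.
  apply: ler_pM; [exact: g_ge0 | | exact: hg |].
    apply: mulr_ge0 => //; rewrite invr_ge0; apply: mulr_ge0; exact: ltW.
  apply: ler_wpM2l; first by rewrite invr_ge0; apply: mulr_ge0; exact: ltW.
  by rewrite mulrA.
have -> : K * (t^-1 * (D * D)^-1 * (33 / 20 / J)) = 33 / 20 * (D * t)^-1 * (K / (J * D)).
  by field; rewrite !lt0r_neq0.
rewrite -[X in _ <= X]mulr1; apply: ler_wpM2l.
  apply: mulr_ge0; [lra | rewrite invr_ge0; apply: mulr_ge0; exact: ltW].
rewrite ler_pdivrMr ?mul1r //; exact: mulr_gt0.
Qed.


Section ZS.
Local Open Scope Z_scope.
Definition Pz : Z := 1000000.
Definition phiC (d : nat) : nat := count (coprime d) (iota 0 d).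
Definition ceilz (a b : Z) : Z := ((a + b - 1) / b).
Definition zn := Z.of_nat.
Definition Wz (d : nat) : Z := if sqf d then ceilz Pz (zn d * zn d * zn (phiC d)) else 0.
Definition cz (m : nat) : Z := ceilz Pz (zn m * zn m).
Definition ctz : Z := ceilz (2 * Pz) 199.
Definition Vz (j : nat) : Z := foldr (fun m acc => cz m + acc) ctz (iota j (100 - j)).
Definition Ez_with (W V : seq Z) (k : nat) : Z :=
  (zn k.+1 * foldr (fun d acc => nth 0 W d * nth 0 V (k %/ d).+1 + acc) 0 (iota 0 101)).
Definition chk1 : bool :=
  let W := map Wz (iota 0 101) in let V := map Vz (iota 0 101) in
  all (fun k => Z.leb (Ez_with W V k * 200) (413 * Pz * Pz)) (iota 6 69).
Definition chk2 : bool :=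
  Z.leb (foldr (fun d acc => Wz d * (52 * zn d + zn d * zn d) + acc) 0 (iota 0 101) * 200)
        (52 * 413 * Pz).
Definition chkW : bool :=
  all (fun d => Z.leb 0 (Wz d) && (sqf d ==> Z.leb Pz (Wz d * (zn d * zn d * zn (phiC d)))))
    (iota 1 100).
Definition chkc : bool :=
  all (fun m => Z.leb Pz (cz m * (zn m * zn m))) (iota 1 99) && Z.leb (2 * Pz) (ctz * 199).

End ZS.
Lemma chk1_ok : chk1 = true. Proof. vm_compute. reflexivity. Qed.
Lemma chk2_ok : chk2 = true. Proof. vm_compute. reflexivity. Qed.
Lemma chkW_ok : chkW = true. Proof. vm_compute. reflexivity. Qed.
Lemma chkc_ok : chkc = true. Proof. vm_compute. reflexivity. Qed.

Lemma znR n : IZR (zn n) = n%:R.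
Proof. by rewrite /zn -INR_IZR_INZ INRE. Qed.

Lemma IZR_foldr (s : seq nat) (f : nat -> Z) c :
  IZR (foldr (fun x acc => Z.add (f x) acc) c s) = \sum_(x <- s) IZR (f x) + IZR c.
Proof.
elim: s => [|x s IH] /=; first by rewrite big_nil add0r.
by rewrite plus_IZR RplusE IH big_cons addrA.
Qed.

Lemma IZR_foldr0 (s : seq nat) (f : nat -> Z) :
  IZR (foldr (fun x acc => Z.add (f x) acc) Z0 s) = \sum_(x <- s) IZR (f x).
Proof.
elim: s => [|x s IH] /=; first by rewrite big_nil.
by rewrite plus_IZR RplusE IH big_cons.
Qed.

Lemma IZR_leb {a b} : Z.leb a b = true -> IZR a <= IZR b.
Proof. by move=> /Z.leb_le h; apply/RleP; apply: IZR_le. Qed.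

Lemma IZR_mul a b : IZR (Z.mul a b) = IZR a * IZR b.
Proof. by rewrite mult_IZR. Qed.

Lemma P0 : 0 < IZR Pz.
Proof. by apply/RltP; apply: IZR_lt. Qed.

Lemma phiC_ok d : phiC d = totient d.
Proof.
rewrite totient_count_coprime /phiC /index_iota subn0.
elim: (iota 0 d) => [|x s IH]; first by rewrite big_nil.
by rewrite big_cons /= IH.
Qed.

Lemma gen_bound (P W X : R) : 0 < P -> 0 < X -> P <= W * X -> X^-1 <= W / P.
Proof.
move=> hP hX h; rewrite ler_pdivlMr // mulrC ler_pdivrMr //.
Qed.

Lemma W_bound d : (d < 101)%N -> g d * invsq d <= IZR (Wz d) / IZR Pz.
Proof.
move=> d101; case: (posnP d) => [->|d0].
  rewrite g0 mul0r (_ : Wz 0 = Z0); last by reflexivity.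
  by rewrite mul0r.
have hd : d \in iota 1 100 by rewrite mem_iota d0 /=.
have := chkW_ok; rewrite /chkW => /allP /(_ d hd) /andP [hW0 hW].
have W0 : 0 <= IZR (Wz d) by have := IZR_leb hW0.
rewrite /g; case hs: (sqf d); rewrite hs /= in hW; last first.
  by rewrite mul0r divr_ge0 // ltW // P0.
rewrite /invsq -invfM -natrM.
apply: gen_bound; first exact: P0.
  by rewrite ltr0n muln_gt0 totient_gt0 d0 muln_gt0 d0.
apply: le_trans (IZR_leb hW) _.
rewrite !IZR_mul !znR phiC_ok !natrM le_eqVlt; apply/orP; left; apply/eqP; ring.
Qed.

Lemma c_bound m : (0 < m)%N -> (m < 100)%N -> invsq m <= IZR (cz m) / IZR Pz.
Proof.
move=> m0 m100.
have hm : m \in iota 1 99 by rewrite mem_iota m0 /=.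
have := chkc_ok; rewrite /chkc => /andP [/allP /(_ m hm) hc _].
apply: gen_bound; first exact: P0.
  by rewrite ltr0n muln_gt0 m0.
apply: le_trans (IZR_leb hc) _.
by rewrite !IZR_mul !znR natrM.
Qed.

Lemma ct_bound : 2 / 199 <= IZR ctz / IZR Pz.
Proof.
have := chkc_ok; rewrite /chkc => /andP [_ hc].
have := IZR_leb hc; rewrite !IZR_mul.
rewrite (_ : IZR 2 = 2) // (_ : IZR 199 = 199); last by rewrite -(znR 199).
move=> h; rewrite ler_pdivlMr ?P0 //.
have := P0; set P := IZR Pz in h *; set c := IZR ctz in h *.
move=> hP.
lra.
Qed.

Lemma V_bound j M : (0 < j)%N -> (j < 100)%N -> Tsum j M <= IZR (Vz j) / IZR Pz.
Proof.
move=> j0 j100.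
apply: le_trans (@Tsum_split2 j 100 M (ltnW j100)) _.
have h100 := @Tsum_le' 100 M erefl.
have hct := ct_bound.
rewrite /Vz IZR_foldr mulrDl mulr_suml.
have : Tsum j 100 <= \sum_(x <- iota j (100 - j)) IZR (cz x) / IZR Pz.
  rewrite /Tsum /index_iota big_seq [X in _ <= X]big_seq.
  apply: ler_sum => m; rewrite mem_iota => /andP [h1 h2].
  apply: c_bound; [exact: leq_trans j0 h1 | lia].
move=> hs.
lra.
Qed.

Lemma nth_tab (f : nat -> Z) n : (n < 101)%N -> nth Z0 (map f (iota 0 101)) n = f n.
Proof. by move=> h; rewrite (nth_map 0) ?size_iota // nth_iota. Qed.

Lemma part1_small k N : (6 <= k)%N -> (k < 75)%N ->
  (k.+1)%:R * \sum_(0 <= d < 101) g d * invsq d * Tsum (k %/ d).+1 N.+1 <= 413 / 200.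
Proof.
move=> k6 k75.
have hk : k \in iota 6 69 by rewrite mem_iota k6 /=; lia.
have := chk1_ok; rewrite /chk1 => /allP /(_ k hk) hE.
have := IZR_leb hE; rewrite /Ez_with !IZR_mul znR IZR_foldr.
rewrite (_ : IZR 200 = 200); last by rewrite -(znR 200).
rewrite (_ : IZR 413 = 413); last by rewrite -(znR 413).
rewrite (_ : IZR Z0 = 0) // addr0.
rewrite (eq_big_seq (fun d => IZR (Wz d) * IZR (Vz (k %/ d).+1))); last first.
  move=> d; rewrite mem_iota => /andP [_ hd].
  rewrite IZR_mul !nth_tab //.
  have : (k %/ d <= k)%N by apply: leq_div.
  lia.
set X := \sum_(_ <- _) _ => hX.
have hP := P0; set P := IZR Pz in hX hP *.
apply: le_trans (_ : (k.+1)%:R * (X / (P * P)) <= _).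
  apply: ler_wpM2l; first exact: ler0n.
  rewrite /X mulr_suml /index_iota subn0 big_seq [X in _ <= X]big_seq.
  apply: ler_sum => d; rewrite mem_iota => /andP [_ hd].
  have -> : IZR (Wz d) * IZR (Vz (k %/ d).+1) / (P * P)
      = (IZR (Wz d) / P) * (IZR (Vz (k %/ d).+1) / P).
    by field; rewrite lt0r_neq0.
  apply: ler_pM.
  - apply: mulr_ge0; [exact: g_ge0 | exact: invsq_ge0].
  - exact: Tsum_ge0.
  - apply: W_bound; lia.
  - apply: V_bound => //.
    have : (k %/ d <= k)%N by apply: leq_div.
    lia.
have hPP : 0 < P * P by apply: mulr_gt0.
rewrite mulrA ler_pdivrMr //.
lra.
Qed.

Lemma KT_bound k d M : (75 <= k)%N -> (0 < d)%N -> (d <= 100)%N ->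
  (k.+1)%:R * Tsum (k %/ d).+1 M <= d%:R + d%:R * d%:R / 52.
Proof.
move=> k75 d0 d100.
set j := (k %/ d).+1.
have hT := @Tsum_le' j M erefl.
have hK : ((k.+1)%:R : R) <= (j * d)%:R by rewrite ler_nat; apply: ltn_ceil.
rewrite natrM in hK.
have T0 := Tsum_ge0 j M.
have hK76 : 76 <= ((k.+1)%:R : R) by rewrite ler_nat.
have hD1 : 1 <= (d%:R : R) by rewrite ler1n.
have hD100 : (d%:R : R) <= 100 by rewrite ler_nat.
move: hT hK T0 hK76 hD1 hD100.
set T := Tsum j M; set K : R := (k.+1)%:R; set J : R := j%:R; set D : R := d%:R.
move=> hT hK T0 hK76 hD1 hD100.
have h1 : T * (2 * K - D) <= 2 * D.
  apply: le_trans (_ : T * (2 * J * D - D) <= _).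
    apply: ler_wpM2l => //; lra.
  have -> : T * (2 * J * D - D) = D * (T * (2 * J - 1)) by ring.
  rewrite [X in _ <= X]mulrC; apply: ler_wpM2l; lra.
have h2 : K * T * (2 * K - D) <= 2 * K * D.
  rewrite -mulrA [X in _ <= X](_ : _ = K * (2 * D)); last by ring.
  apply: ler_wpM2l => //; lra.
have h3 : 2 * K * D <= (D + D * D / 52) * (2 * K - D).
  have hp : 0 <= D * D * (2 * K - D - 52) by apply: mulr_ge0; [apply: mulr_ge0; lra | lra].
  have -> : (D + D * D / 52) * (2 * K - D) = 2 * K * D + D * D * (2 * K - D - 52) / 52 by field.
  lra.
rewrite -(@ler_pM2r _ (2 * K - D)); last lra.
exact: le_trans h2 h3.
Qed.

Lemma part1_large k N : (75 <= k)%N ->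
  (k.+1)%:R * \sum_(0 <= d < 101) g d * invsq d * Tsum (k %/ d).+1 N.+1 <= 413 / 200.
Proof.
move=> k75.
have := chk2_ok; rewrite /chk2 => hE.
have := IZR_leb hE.
rewrite (IZR_mul (foldr _ _ _) (Zpos 200)) (IZR_mul (Z.mul (Zpos 52) (Zpos 413)) Pz).
rewrite (IZR_mul (Zpos 52) (Zpos 413)) IZR_foldr0.
rewrite (_ : IZR 200 = 200); last by rewrite -(znR 200).
rewrite (_ : IZR 52 = 52); last by rewrite -(znR 52).
rewrite (_ : IZR 413 = 413); last by rewrite -(znR 413).
rewrite (eq_bigr (fun d => IZR (Wz d) * (52 * d%:R + d%:R * d%:R))); last first.
  move=> d _; rewrite IZR_mul plus_IZR RplusE !IZR_mul !znR.
  by rewrite (_ : IZR 52 = 52); last by rewrite -(znR 52).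
set X := \sum_(_ <- _) _ => hX.
have hP := P0; set P := IZR Pz in hX hP *.
apply: le_trans (_ : X / (52 * P) <= _); last first.
  rewrite ler_pdivrMr; last by apply: mulr_gt0 => //; lra.
  lra.
rewrite mulr_sumr /X mulr_suml /index_iota subn0 big_seq [X in _ <= X]big_seq.
apply: ler_sum => d; rewrite mem_iota => /andP [_ hd].
case: (posnP d) => [->|d0].
  by rewrite g0 !mul0r mulr0.
have -> : IZR (Wz d) * (52 * d%:R + d%:R * d%:R) / (52 * P)
    = (IZR (Wz d) / P) * (d%:R + d%:R * d%:R / 52).
  by field; rewrite lt0r_neq0.
rewrite mulrCA mulrA -(mulrA _ (k.+1)%:R).
apply: ler_pM.
- apply: mulr_ge0; [exact: g_ge0 | exact: invsq_ge0].
- apply: mulr_ge0; [exact: ler0n | exact: Tsum_ge0].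
- apply: W_bound; lia.
- apply: KT_bound => //; lia.
Qed.

Lemma part1 k N : (6 <= k)%N ->
  (k.+1)%:R * \sum_(0 <= d < 101) g d * invsq d * Tsum (k %/ d).+1 N.+1 <= 413 / 200.
Proof.
move=> k6; case: (ltnP k 75) => h; [exact: part1_small | exact: part1_large].
Qed.
Lemma stepS k N : (6 <= k)%N -> (k.+1)%:R * S k N <= 413 / 200 + 33 / 20 * S 100 N.
Proof.
move=> k6.
apply: le_trans (_ : (k.+1)%:R * \sum_(0 <= d < N.+1) g d * invsq d * Tsum (k %/ d).+1 N.+1 <= _).
  apply: ler_wpM2l; [exact: ler0n | exact: bound1].
apply: le_trans (_ : (k.+1)%:R * (\sum_(0 <= d < 101) g d * invsq d * Tsum (k %/ d).+1 N.+1
   + \sum_(101 <= d < N.+1) g d * invsq d * Tsum (k %/ d).+1 N.+1) <= _).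
  apply: ler_wpM2l; [exact: ler0n | apply: split_sum => d; exact: Fterm_ge0].
rewrite mulrDr; apply: lerD; [exact: part1 | exact: part2].
Qed.

Lemma mainS k N : (6 <= k)%N -> (k.+1)%:R * S k N <= 21 / 10.
Proof.
move=> k6.
have h100 := @stepS 100 N erefl.
have hk := @stepS k N k6.
have s0 := S_ge0 100 N.
move: h100 hk; set s := S 100 N; set X := (k.+1)%:R * S k N.
lra.
Qed.

Section RS.
Local Open Scope ring_scope.

Lemma mainS2 k N : (6 <= k)%N -> S k N <= 21 / 10 / (k.+1)%:R.
Proof.
move=> k6; have h := @mainS k N k6.
rewrite ler_pdivlMr ?ltr0n // mulrC; exact: h.
Qed.

Lemma sum_n_big (a : nat -> R) N : sum_n a N = \sum_(0 <= n < N.+1) a n.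
Proof.
elim: N => [|N IH]; first by rewrite sum_O big_nat1.
by rewrite sum_Sn IH [in RHS]big_nat_recr.
Qed.

End RS.

Open Scope R_scope.

Lemma tail_eq x k n : INR k <= x -> x < INR k + 1 ->
  tail_term x n = if (k < n)%N then / (INR n * INR (totient n)) else 0.
Proof.
move=> h1 h2; rewrite /tail_term; case: Rlt_dec => h; case: ltnP => hk.
- by [].
- have : INR n <= INR k by apply: le_INR; apply/ssrnat.leP.
  move=> h3; exfalso; Lra.lra.
- have : INR k.+1 <= INR n by apply: le_INR; apply/ssrnat.leP.
  rewrite S_INR => h3; exfalso; apply: h; Lra.lra.
- by [].
Qed.

Lemma sum_tail x k N : INR k <= x -> x < INR k + 1 ->
  sum_n (tail_term x) N = S k N.
Proof.
move=> h1 h2; rewrite sum_n_big (eq_bigr _ (fun n _ => @tail_eq x k n h1 h2)).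
rewrite -big_mkcond /= cond_range /S; apply: eq_bigr => n _.
by rewrite natrM -!INRE.
Qed.


Lemma final_bound k N : (6 <= k)%N -> S k N <= 21 / 10 / (INR k + 1).
Proof.
move=> k6; apply/RleP; rewrite -S_INR INRE !RdivE !IZRposE !INRE.
exact: mainS2.
Qed.

Lemma S_ge0' k N : 0 <= S k N.
Proof. apply/RleP; exact: S_ge0. Qed.

Theorem mainTheorem16 (x : R) (hx : 6 <= x) :
  ex_series (tail_term x) /\ Series (tail_term x) < 2.1 / x.
Proof.
have [ha1 ha2] := archimed x.
set z := Z.pred (up x).
have hz : IZR z = IZR (up x) - 1 by rewrite /z -Z.sub_1_r minus_IZR.
have hz1 : IZR z <= x by rewrite hz; Lra.lra.
have hz2 : x < IZR z + 1 by rewrite hz; Lra.lra.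
have hz0 : Z.le Z0 z by apply: le_IZR; Lra.lra.
set k := Z.to_nat z.
have hk : INR k = IZR z by rewrite /k INR_IZR_INZ Z2Nat.id.
have hk1 : INR k <= x by rewrite hk.
have hk2 : x < INR k + 1 by rewrite hk.
have k6 : (6 <= k)%N.
  have : INR 5 < INR k by rewrite (_ : INR 5 = 5); [Lra.lra | simpl; Lra.lra].
  move/INR_lt => /ssrnat.ltP; lia.
set B := 21 / 10 / (INR k + 1).
have hb : forall N, sum_n (tail_term x) N <= B.
  move=> N; rewrite (@sum_tail x k N hk1 hk2); exact: final_bound.
have hinc : forall N, sum_n (tail_term x) N <= sum_n (tail_term x) N.+1.
  move=> N; rewrite sum_Sn; rewrite /plus /=.
  have : 0 <= tail_term x N.+1.
    rewrite /tail_term; destruct (Rlt_dec x (INR N.+1)) as [hh|hh]; last by apply: Rle_refl.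
    apply: Rlt_le; apply: Rinv_0_lt_compat; apply: Rmult_lt_0_compat.
      by apply: lt_0_INR; apply/ssrnat.ltP.
    apply: lt_0_INR; apply/ssrnat.ltP; rewrite totient_gt0 //.
  Lra.lra.
have [l Hl] := ex_finite_lim_seq_incr _ B hinc hb.
split; first by exists l.
have -> : Series (tail_term x) = l by rewrite /Series (is_lim_seq_unique _ _ Hl).
have hlB : l <= B.
  have := is_lim_seq_le _ _ _ _ hb Hl (is_lim_seq_const B); by [].
have hk0 : 0 < INR k + 1 by Lra.lra.
have hx0 : 0 < x by Lra.lra.
have hinv : / (INR k + 1) < / x by apply: Rinv_lt_contravar => //; apply: Rmult_lt_0_compat.
rewrite /B /Rdiv in hlB *.
unfold Q2R; simpl.
Lra.lra.
Qed.
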